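(* Consider a run of Dynamic A* (with \texttt{reeval} true or false) using a dyn-safe dynamic heuristic, and an iteration $i$ of it. Let $s$ be a state settled in iteration $i$, and let $s'$ be a state with $h^*(s')<\infty$ such that there is an optimal path $\langle t_1,\dots,t_n\rangle$ from $s_I$ to $s'$ with $t_n=\langle s,\ell,s'\rangle$. Then at the beginning of iteration $i$, either Open contains an entry $\langle s',\hat g,\cdot\rangle$ with $\hat g=g^*(s')$, or $s'$ is settled in iteration $i$.
   Context: A transition system is $\mathcal T=\langle S,L,c,T,s_I,S_G\rangle$ with finite states $S$, finite labels $L$, cost function $c:L\to\mathbb R_{\ge0}$, transitions $T\subseteq S\times L\times S$, initial state $s_I$, goal states $S_G\subseteq S$. Paths, costs, solutions (paths from $s_I$ to a goal state) are as usual; $g^*(s)$ is the cost of an optimal path from $s_I$ to $s$ and $h^*(s)$ the minimal cost of a path from $s$ to a goal ($\infty$ if none). An information source $\sigma$ consists of a set $\mathcal I_\sigma$, $\iota_0^\sigma\in\mathcal I_\sigma$, $\mathrm{update}_\sigma:\mathcal I_\sigma\times T\to\mathcal I_\sigma$, $\mathrm{refine}_\sigma:\mathcal I_\sigma\times S\to\mathcal I_\sigma$. Reachable information: $\iota_n$ is reachable if obtained from $\iota_0^\sigma$ by a sequence of refine steps on states and update steps on transitions $e_1,\dots,e_n$, where each refined state and each origin of an updated transition is $s_I$ or the target of an earlier updated transition. A dynamic heuristic over $\sigma$ is $h:S\times\mathcal I_\sigma\to\mathbb R_{\ge0}\cup\{\infty\}$; it is dyn-safe if $h(s,\iota)=\infty$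 implies $h^*(s)=\infty$ for all $s$ and reachable $\iota$. Parent source $\sigma_p$: $\mathcal I_{\sigma_p}$ = partial functions $S\rightharpoonup\mathbb R_{\ge0}\times(T\cup\{\bot\})$; $\iota_0=\{s_I\mapsto\langle0,\bot\rangle\}$; refine is the identity; $\mathrm{update}(\iota,\langle s,\ell,s'\rangle)$ with $\iota(s)=\langle g,\cdot\rangle$ changes only $s'$, setting it to $\langle g+c(\ell),\langle s,\ell,s'\rangle\rangle$ if $\iota(s')$ is undefined or has $g$-component $\ge g+c(\ell)$, otherwise unchanged. Dynamic A* takes $\mathcal T$, sources $\sigma_p,\sigma_h$, a dynamic heuristic $h$ over $\sigma_h$ and a Boolean flag \texttt{reeval}. Notation: at any moment $g(s)$ is the $g$-component of the current $\mathcal I(\sigma_p)(s)$ and $h(s)$ denotes $h(s,\mathcal I(\sigma_h))$ for the current $\mathcal I(\sigma_h)$. Open is a priority queue of entries $\langle s,g,h\rangle$ (duplicates allowed), popped by minimal stored value $g+h$ (ties arbitrary). Algorithm: 1. $\mathcal I(\sigma):=\iota_0^\sigma$ for both sources; $S_{\mathrm{known}}:=\{s_I\}$; Closed $:=\emptyset$; Open empty. If $h(s_I)<\infty$ insert $\langle s_I,g(s_I),h(s_I)\rangle$. 2. While Open is nonempty: pop an entry $\langle s,\hat g,\hat h\rangle$ of minimal $\hat g+\hat h$. If $s\in$ Closed, continue with the next iteration. Otherwise set $\mathcal I(\sigma):=\mathrm{refine}_\sigma(\mathcal I(\sigma),s)$ for both sources. If \texttt{reeval} is true and $\hat h<h(s)$: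 if $h(s)<\infty$ insert $\langle s,g(s),h(s)\rangle$; continue with the next iteration (this is a re-evaluation). Otherwise add $s$ to Closed ($s$ is expanded). If $s\in S_G$, return the path obtained by following the parent pointers of $\mathcal I(\sigma_p)$ from $s$ back to $s_I$. Otherwise, for each $t=\langle s,\ell,s'\rangle\in T$ in some order: let $old:=g(s')$ if $s'\in S_{\mathrm{known}}$ and undefined otherwise; set $\mathcal I(\sigma):=\mathrm{update}_\sigma(\mathcal I(\sigma),t)$ for both sources; add $s'$ to $S_{\mathrm{known}}$; if $h(s')=\infty$ skip $s'$; else if $old$ is undefined insert $\langle s',g(s'),h(s')\rangle$; else if $old>g(s')$, remove $s'$ from Closed if it is there (reopening) and insert $\langle s',g(s'),h(s')\rangle$. 3. Return ''unsolvable''. Times: the iterations of the while loop are numbered $i=1,2,\dots$ (iteration $i$ begins just before its pop); within iteration $i$ a step counter $j$ is $0$ at the start, becomes $1$ after the refine step, and increases by $1$ after each update step on a successor transition. Time $\langle i,j\rangle$ (time $\langle0,0\rangle$ is the initialization) is ordered lexicographically, and $g^{i,j}(s)$, $h^{i,j}(s)$ denote $g(s)$ and $h(s)$ with the information current at that time. A state $s$ is settled in iteration $i$ if it was expanded (added to Closed) in some iteration $i'<i$ with $g^{i',0}(s)=g^*(s)$. *)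

(* Defs.v *)
(* Model of Dynamic A* (nondeterministic: arbitrary tie
   breaking, arbitrary successor order, arbitrary heuristic source). *)
From HB Require Import structures.
From mathcomp Require Import all_boot all_order all_algebra.
Import Order.TTheory GRing.Theory Num.Theory.
Local Open Scope ring_scope.

Section DynAStar.
Variable R : realFieldType.
Variables S L : finType.

Definition trans := (S * L * S)%type.
Definition src (t : trans) : S := t.1.1.
Definition lab (t : trans) : L := t.1.2.
Definition tgt (t : trans) : S := t.2.

Inductive event := ESkip | EReeval | EExpand of S.

(* information of the parent source sigma_p:
   partial functions S -/-> R x (T u {bot}); None = undefined, bot = None *)
Definition pinfo := S -> option (R * option trans).

(* Extended nonnegative heuristic values: None stands for infinity. *)
Definition lt_ext (r : R) (o : option R) : bool :=
  match o with Some x => r < x | None => true end.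

(* Open entries <s, g, h> *)
Definition entry := (S * R * R)%type.

Variable c : L -> R.
Variable T : {set trans}.
Variable sI : S.
Variable SG : {set S}.

Fixpoint is_path (x : S) (p : seq trans) (y : S) : Prop :=
  match p with
  | [::] => x = y
  | t :: p' => [/\ t \in T, src t = x & is_path (tgt t) p' y]
  end.

Definition path_cost (p : seq trans) : R := \sum_(t <- p) c (lab t).

Definition hstar_finite (x : S) : Prop :=
  exists p y, is_path x p y /\ y \in SG.

Definition is_gstar (x : S) (v : R) : Prop :=
  (exists p, is_path sI p x /\ path_cost p = v) /\
  (forall p, is_path sI p x -> v <= path_cost p).

Definition optimal_path (p : seq trans) (x : S) : Prop :=
  is_path sI p x /\ (forall q, is_path sI q x -> path_cost p <= path_cost q).

Definition pinit : pinfo :=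
  fun x => if x == sI then Some (0, None) else None.

Definition pupdate (i : pinfo) (t : trans) : pinfo :=
  match i (src t) with
  | None => i
  | Some (g, _) =>
      let g' := g + c (lab t) in
      let ok := match i (tgt t) with Some (g0, _) => g' <= g0 | None => true end in
      if ok then (fun x => if x == tgt t then Some (g', Some t) else i x) else i
  end.

(* g-component (only used at states where it is defined) *)
Definition gval (i : pinfo) (x : S) : R :=
  match i x with Some (g, _) => g | None => 0 end.

(* A generic information source sigma_h and a dynamic heuristic over it *)
Variable Ih : Type.
Variable ih0 : Ih.
Variable hupd : Ih -> trans -> Ih.
Variable href : Ih -> S -> Ih.
Variable h : S -> Ih -> option R.

(* reachable information; K = states that are s_I or targets of
   previously updated transitions *)
Inductive reach_info : Ih -> {set S} -> Prop :=
| RI0 : reach_info ih0 [set sI]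
| RIref i K x : reach_info i K -> x \in K -> reach_info (href i x) K
| RIupd i K t : reach_info i K -> t \in T -> src t \in K ->
                reach_info (hupd i t) (tgt t |: K).

Definition reachable_info (i : Ih) : Prop := exists K, reach_info i K.

Definition dyn_safe : Prop :=
  forall i, reachable_info i -> forall x, h x i = None -> ~ hstar_finite x.

Record config := Config {
  cp : pinfo;
  ch : Ih;
  known : {set S};
  closed : {set S};
  open : seq entry       (* Open (a multiset) *)
}.

Definition init_config : config :=
  Config pinit ih0 [set sI] set0
    (match h sI ih0 with Some hv => [:: (sI, gval pinit sI, hv)] | None => [::] end).

Definition process_succ (cf : config) (t : trans) : config :=
  let s' := tgt t in
  let old := if s' \in known cf then Some (gval (cp cf) s') else None in
  let p' := pupdate (cp cf) t in
  let h' := hupd (ch cf) t in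
  let K' := s' |: known cf in
  match h s' h' with
  | None => Config p' h' K' (closed cf) (open cf)
  | Some hv =>
      match old with
      | None => Config p' h' K' (closed cf) ((s', gval p' s', hv) :: open cf)
      | Some o =>
          if gval p' s' < o
          then Config p' h' K' (closed cf :\ s') ((s', gval p' s', hv) :: open cf)
          else Config p' h' K' (closed cf) (open cf)
      end
  end.

Definition min_entry (o : seq entry) (e : entry) : Prop :=
  forall e', e' \in o -> e.1.2 + e.2 <= e'.1.2 + e'.2.

(* one (non-terminating) iteration of the while loop *)
Inductive iter_step (reeval : bool) : config -> event -> config -> Prop :=
| StSkip cf o1 o2 e :
    open cf = o1 ++ e :: o2 -> min_entry (open cf) e ->
    e.1.1 \in closed cf ->
    iter_step reeval cf ESkip (Config (cp cf) (ch cf) (known cf) (closed cf) (o1 ++ o2))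
| StReeval cf o1 o2 e :
    open cf = o1 ++ e :: o2 -> min_entry (open cf) e ->
    e.1.1 \notin closed cf ->
    reeval -> lt_ext e.2 (h e.1.1 (href (ch cf) e.1.1)) ->
    iter_step reeval cf EReeval
      (Config (cp cf) (href (ch cf) e.1.1) (known cf) (closed cf)
         (match h e.1.1 (href (ch cf) e.1.1) with
          | Some hv => (e.1.1, gval (cp cf) e.1.1, hv) :: (o1 ++ o2)
          | None => o1 ++ o2 end))
| StExpand cf o1 o2 e ts :
    open cf = o1 ++ e :: o2 -> min_entry (open cf) e ->
    e.1.1 \notin closed cf ->
    ~~ (reeval && lt_ext e.2 (h e.1.1 (href (ch cf) e.1.1))) ->
    e.1.1 \notin SG ->
    uniq ts -> (forall t, (t \in ts) = (t \in T) && (src t == e.1.1)) ->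
    iter_step reeval cf (EExpand e.1.1)
      (foldl process_succ
         (Config (cp cf) (href (ch cf) e.1.1) (known cf) (e.1.1 |: closed cf) (o1 ++ o2))
         ts).

(* x is settled in iteration i of the run (run k = configuration at the
   beginning of iteration k, ev k = what iteration k did) *)
Definition settled (run : nat -> config) (ev : nat -> event) (i : nat) (x : S) : Prop :=
  exists i', [/\ (1 <= i' < i)%N, ev i' = EExpand x &
    exists g par, cp (run i') x = Some (g, par) /\ is_gstar x g].

End DynAStar.

(* Main.v *)
From Pilot Require Import Defs.
From HB Require Import structures.
From mathcomp Require Import all_boot all_order all_algebra.
Import Order.TTheory GRing.Theory Num.Theory.
Local Open Scope ring_scope.

Section Proof.
Variable R : realFieldType.
Variables S L : finType.
Variable c : L -> R.
Variable T : {set trans S L}.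
Variable sI : S.
Variable SG : {set S}.
Variable Ih : Type.
Variable ih0 : Ih.
Variable hupd : Ih -> trans S L -> Ih.
Variable href : Ih -> S -> Ih.
Variable h : S -> Ih -> option R.
Hypothesis c_ge0 : forall l, 0 <= c l.

Local Notation cfg := (Pilot.Defs.config R S L Ih).
Local Notation psucc := (Pilot.Defs.process_succ R S L c Ih hupd h).
Local Notation pupd := (Pilot.Defs.pupdate R S L c).
Local Notation ispath := (Pilot.Defs.is_path S L T).
Local Notation pcost := (Pilot.Defs.path_cost R S L c).
Local Notation src := (Pilot.Defs.src S L).
Local Notation tgt := (Pilot.Defs.tgt S L).
Local Notation lab := (Pilot.Defs.lab S L).
Local Notation cp := (Pilot.Defs.cp R S L Ih).
Local Notation ch := (Pilot.Defs.ch R S L Ih).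
Local Notation known := (Pilot.Defs.known R S L Ih).
Local Notation closed := (Pilot.Defs.closed R S L Ih).
Local Notation open := (Pilot.Defs.open R S L Ih).
Local Notation RI := (reach_info S L T sI Ih ih0 hupd href).

Definition le_def (P : pinfo R S L) x v := exists g par, P x = Some (g, par) /\ g <= v.

Lemma pcost_rcons q t : pcost (rcons q t) = pcost q + c (lab t).
Proof. by rewrite /path_cost -cats1 big_cat big_seq1. Qed.

Lemma is_path_rcons x q t y :
  ispath x (rcons q t) y <-> [/\ ispath x q (src t), t \in T & tgt t = y].
Proof.
elim: q x => [|a q IH] x /=.
  by split=> [[? ? ?]|[? ? ?]]; split.
split=> [[Ha Hs /IH [H1 H2 H3]]|[[Ha Hs H1] H2 H3]]; split=> //.
by apply/IH.
Qed.

Lemma pupd_spec P t y :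
  pupd P t y = P y \/
  (y = tgt t /\ exists g par, P (src t) = Some (g, par) /\
     pupd P t y = Some (g + c (lab t), Some t) /\
     forall g0 par0, P y = Some (g0, par0) -> g + c (lab t) <= g0).
Proof.
rewrite /pupdate; case E: (P (src t)) => [[g par]|]; last by left.
rewrite /=; case: ifP => Hok; last by left.
case: eqP => [Ey|]; last by left.
right; split=> //; exists g, par; split=> //; split=> //.
move=> g0 par0 E0; move: Hok; by rewrite -Ey E0.
Qed.

Lemma pupd_tgt P t g par : P (src t) = Some (g, par) ->
  le_def (pupd P t) (tgt t) (g + c (lab t)).
Proof.
move=> E; rewrite /le_def /pupdate E /=.
case E2: (P (tgt t)) => [[g0 p0]|] /=.
  case: ifP => Hok; first by rewrite eqxx; exists (g + c (lab t)), (Some t).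
  exists g0, p0; split=> //; rewrite leNgt in Hok.
  by apply: ltW; move: Hok; case: ltP.
by rewrite eqxx; exists (g + c (lab t)), (Some t).
Qed.

Lemma pupd_mono P t x v : le_def P x v -> le_def (pupd P t) x v.
Proof.
move=> [g [par [E Hv]]]; rewrite /le_def; case: (pupd_spec P t x) => [->|[Ex [g1 [p1 [E1 [E2 Hle]]]]]].
  by exists g, par.
exists (g1 + c (lab t)), (Some t); split=> //.
by apply: le_trans (Hle _ _ E) Hv.
Qed.

Lemma pupd_some P t y : isSome (P (src t)) ->
  isSome (pupd P t y) = isSome (P y) || (y == tgt t).
Proof.
move=> Hs.
case: (pupd_spec P t y) => [E|[Ey [g1 [p1 [E1 [E2 _]]]]]]; last by rewrite E2 Ey eqxx orbT.
rewrite E; case Ps: (P y) => //=.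
case: eqP => // Ey; exfalso.
case Es: (P (src t)) Hs => // [[g par]] _.
have [g' [par' [E' _]]] := pupd_tgt P t g par Es.
by move: E'; rewrite -Ey E Ps.
Qed.

Definition ginv (P : pinfo R S L) :=
  forall x g par, P x = Some (g, par) -> exists q, ispath sI q x /\ pcost q = g.

Lemma pupd_ginv P t : t \in T -> ginv P -> ginv (pupd P t).
Proof.
move=> HT HP x g par.
case: (pupd_spec P t x) => [->|[Ex [g1 [p1 [E1 [E2 _]]]]]]; first exact: HP.
rewrite E2 => -[<- _].
have [q [Hq Hc]] := HP _ _ _ E1.
exists (rcons q t); split; first by apply/is_path_rcons.
by rewrite pcost_rcons Hc.
Qed.

Definition Inv (cf : cfg) :=
  [/\ ginv (cp cf),
      forall x, (x \in known cf) = isSome (cp cf x),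
      forall e, e \in open cf -> e.1.1 \in known cf,
      closed cf \subset known cf &
      RI (ch cf) (known cf)].

Lemma psucc_shape cf t :
  [/\ cp (psucc cf t) = pupd (cp cf) t, ch (psucc cf t) = hupd (ch cf) t,
      known (psucc cf t) = tgt t |: known cf,
      closed (psucc cf t) \subset closed cf &
      (forall e, e \in open (psucc cf t) -> e \in open cf \/ e.1.1 = tgt t) /\
      {subset open cf <= open (psucc cf t)}].
Proof.
rewrite /process_succ; case: (h _ _) => [hv|]; last by split=> //; split=> // e; left.
case: (_ \in known cf); last first.
  split=> //=; split=> [e|e He]; rewrite ?in_cons ?He ?orbT //.
  by case/orP=> [/eqP->|]; [right|left].
case: ifP => _; split=> //=; rewrite ?subsetDl //; split=> [e|e He]; rewrite ?in_cons ?He ?orbT //;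
  try by left.
by case/orP=> [/eqP->|]; [right|left].
Qed.

Lemma psucc_Inv cf t : Inv cf -> t \in T -> src t \in known cf -> Inv (psucc cf t).
Proof.
move=> [H1 H2 H3 H4 H5] HT Hs.
have [E1 E2 E3 E4 [E5 E6]] := psucc_shape cf t.
have Hs' : isSome (cp cf (src t)) by rewrite -H2.
split; rewrite ?E1 ?E2 ?E3.
- exact: pupd_ginv.
- by move=> x; rewrite pupd_some // in_setU1 H2 orbC.
- move=> e /E5 [/H3 He|->]; rewrite in_setU1 ?eqxx //; by rewrite He orbT.
- by apply: subset_trans E4 _; apply: subset_trans H4 _; apply/subsetP=> x Hx; rewrite in_setU1 Hx orbT.
- exact: RIupd.
Qed.

Lemma fold_Inv ts cf : Inv cf -> (forall t, t \in ts -> t \in T /\ src t \in known cf) ->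
  Inv (foldl psucc cf ts).
Proof.
elim: ts cf => [|t ts IH] cf //= HI Hts.
have [HT Hs] := Hts t (mem_head _ _).
apply: IH; first exact: psucc_Inv.
move=> t' Ht'; have [HT' Hs'] : t' \in T /\ src t' \in known cf by apply: Hts; rewrite in_cons Ht' orbT.
have [_ _ E3 _ _] := psucc_shape cf t.
by rewrite E3 in_setU1 Hs' orbT.
Qed.

Lemma fold_mono ts cf x v : le_def (cp cf) x v -> le_def (cp (foldl psucc cf ts)) x v.
Proof.
elim: ts cf => [|t ts IH] cf //= H; apply: IH.
have [E1 _ _ _ _] := psucc_shape cf t; rewrite E1; exact: pupd_mono.
Qed.

Lemma fold_tgt ts cf t0 v : t0 \in ts -> le_def (cp cf) (src t0) v ->
  le_def (cp (foldl psucc cf ts)) (tgt t0) (v + c (lab t0)).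
Proof.
elim: ts cf => [|t ts IH] cf //= Hin H.
have [E1 _ _ _ _] := psucc_shape cf t.
move: Hin; rewrite in_cons => /orP[/eqP Et|Hin].
  subst t; apply: fold_mono; rewrite E1.
  have [g [par [Eg Hg]]] := H.
  have [g' [par' [E' Hg']]] := pupd_tgt _ _ _ _ Eg.
  exists g', par'; split=> //; apply: le_trans Hg' _; by rewrite lerD2r.
apply: IH => //; rewrite E1; exact: pupd_mono.
Qed.


Variable reeval : bool.
Local Notation step := (Pilot.Defs.iter_step R S L c T SG Ih hupd href h reeval).
Local Notation entry := (Pilot.Defs.entry R S).

Lemma mem_drop (o1 o2 : seq entry) e x : x \in o1 ++ o2 -> x \in o1 ++ e :: o2.
Proof. by rewrite !mem_cat in_cons => /orP[->|->]; rewrite ?orbT. Qed.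

Lemma mem_pick (o1 o2 : seq entry) e x : x \in o1 ++ e :: o2 -> x = e \/ x \in o1 ++ o2.
Proof.
rewrite !mem_cat in_cons => /orP[->|/orP[/eqP->|->]]; rewrite ?orbT; by [right|left|right].
Qed.

Lemma expand_Inv0 cf o1 o2 (e : entry) : Inv cf -> open cf = o1 ++ e :: o2 ->
  Inv (Config R S L Ih (cp cf) (href (ch cf) e.1.1) (known cf) (e.1.1 |: closed cf) (o1 ++ o2)).
Proof.
move=> [H1 H2 H3 H4 H5] Eo.
have He : e.1.1 \in known cf by apply: H3; rewrite Eo mem_cat mem_head orbT.
split=> //=.
- by move=> x Hx; apply: H3; rewrite Eo; exact: mem_drop.
- by rewrite subUset sub1set He.
- exact: RIref.
Qed.

Lemma step_Inv cf ev cf' : step cf ev cf' -> Inv cf -> Inv cf'.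
Proof.
case=> [cf0 o1 o2 e Eo _ _ | cf0 o1 o2 e Eo _ _ _ _ | cf0 o1 o2 e ts Eo _ _ _ _ _ Hts] HI;
  have [H1 H2 H3 H4 H5] := HI;
  have He : e.1.1 \in known cf0 by (apply: H3; rewrite Eo mem_cat mem_head orbT).
- split=> //= x Hx; apply: H3; rewrite Eo; exact: mem_drop.
- split=> //=; last exact: RIref.
  case: (h _ _) => [hv|] x; rewrite ?in_cons.
    by case/orP=> [/eqP->//|Hx]; apply: H3; rewrite Eo; exact: mem_drop.
  by move=> Hx; apply: H3; rewrite Eo; exact: mem_drop.
- apply: fold_Inv; first exact: expand_Inv0.
  by move=> t; rewrite Hts => /andP[-> /eqP->].
Qed.

Lemma step_mono cf ev cf' x v : step cf ev cf' -> le_def (cp cf) x v -> le_def (cp cf') x v.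
Proof.
case=> [cf0 o1 o2 e _ _ _ | cf0 o1 o2 e _ _ _ _ _ | cf0 o1 o2 e ts _ _ _ _ _ _ _] //.
move=> H; apply: fold_mono; exact: H.
Qed.


Variable sp : S.
Variable gs : R.
Hypothesis Hgs : is_gstar R S L c T sI sp gs.
Hypothesis Hfin : hstar_finite S L T SG sp.
Hypothesis hsafe : dyn_safe R S L T sI SG Ih ih0 hupd href h.

Definition Jc (St : Prop) (cf : cfg) :=
  (forall par, cp cf sp = Some (gs, par) -> (exists hh, (sp, gs, hh) \in open cf) \/ St) /\
  (forall par, sp \in closed cf -> cp cf sp = Some (gs, par) -> St).

Lemma ginv_ge P g par : ginv P -> P sp = Some (g, par) -> gs <= g.
Proof. move=> HP /HP [q [Hq <-]]; exact: Hgs.2. Qed.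

Lemma h_some i K : RI i K -> exists hv, h sp i = Some hv.
Proof.
move=> HRI; case E: (h sp i) => [hv|]; first by exists hv.
by exfalso; apply: (hsafe i (ex_intro _ K HRI) sp E Hfin).
Qed.

Lemma psucc_new cf t : Inv cf -> t \in T -> src t \in known cf ->
  (forall par, cp cf sp <> Some (gs, par)) ->
  forall par, cp (psucc cf t) sp = Some (gs, par) ->
  (exists hh, (sp, gs, hh) \in open (psucc cf t)) /\ sp \notin closed (psucc cf t).
Proof.
move=> [H1 H2 H3 H4 H5] HT Hs NB par.
have [E1 _ _ _ _] := psucc_shape cf t.
rewrite E1 => Ep.
case: (pupd_spec (cp cf) t sp) => [E|[Esp [g [p0 [Es [E2 Hle]]]]]].
  by exfalso; apply: (NB par); rewrite -E.
have [hv Hv] : exists hv, h sp (hupd (ch cf) t) = Some hv.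
  by apply: (h_some _ (tgt t |: known cf)); apply: RIupd.
rewrite /process_succ /= -Esp Hv.
have Hgv : gval R S L (pupd (cp cf) t) sp = gs by rewrite /gval Ep.
case Hk: (sp \in known cf).
  move: (Hk); rewrite H2; case Eo: (cp cf sp) => [[g0 p1]|] // _.
  have Hlt : gs < gval R S L (cp cf) sp.
    rewrite /gval Eo lt_neqAle (ginv_ge _ _ _ H1 Eo) andbT.
    by apply/eqP=> Eg; apply: (NB p1); rewrite Eo Eg.
  rewrite Hgv Hlt /=; split; first by exists hv; rewrite mem_head.
  by rewrite in_setD1 eqxx.
rewrite Hgv /=; split; first by exists hv; rewrite mem_head.
by apply/negP=> Hc; move: (subsetP H4 _ Hc); rewrite Hk.
Qed.

Lemma psucc_J St cf t : Inv cf -> t \in T -> src t \in known cf -> Jc St cf -> Jc St (psucc cf t).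
Proof.
move=> HI HT Hs [J1 J2].
have [E1 E2 E3 E4 [E5 E6]] := psucc_shape cf t.
have [H1 H2 H3 H4 H5] := HI.
have gen : (forall par, cp cf sp <> Some (gs, par)) -> Jc St (psucc cf t).
  move=> NB; split.
    by move=> par /(psucc_new _ _ HI HT Hs NB) [? _]; left.
  by move=> par Hc /(psucc_new _ _ HI HT Hs NB) [_ Hn]; rewrite Hc in Hn.
case Eold: (cp cf sp) => [[g0 p0]|]; last by apply: gen; rewrite Eold.
case: (eqVneq g0 gs) => [Eg|Hne]; last by apply: gen => par; rewrite Eold => -[/eqP]; rewrite (negbTE Hne).
subst g0; split.
  move=> _ _; case: (J1 p0 Eold) => [[hh Hh]|]; last by right.
  by left; exists hh; exact: E6.
by move=> par Hc _; apply: (J2 p0 _ Eold); exact: (subsetP E4).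
Qed.

Lemma fold_J St ts cf : Inv cf -> (forall t, t \in ts -> t \in T /\ src t \in known cf) ->
  Jc St cf -> Jc St (foldl psucc cf ts).
Proof.
elim: ts cf => [|t ts IH] cf //= HI Hts HJ.
have [HT Hs] := Hts t (mem_head _ _).
apply: IH; [exact: psucc_Inv | | exact: psucc_J].
move=> t' Ht'; have [HT' Hs'] : t' \in T /\ src t' \in known cf by apply: Hts; rewrite in_cons Ht' orbT.
have [_ _ E3 _ _] := psucc_shape cf t.
by rewrite E3 in_setU1 Hs' orbT.
Qed.

Lemma step_J St St' cf ev cf' : step cf ev cf' -> Inv cf -> Jc St cf -> (St -> St') ->
  (forall par, ev = EExpand S sp -> cp cf sp = Some (gs, par) -> St') -> Jc St' cf'.
Proof.
case=> [cf0 o1 o2 e Eo _ Hcl | cf0 o1 o2 e Eo _ Hcl _ _ | cf0 o1 o2 e ts Eo _ _ _ _ _ Hts] HI [J1 J2] HSt HEx;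
  have [H1 H2 H3 H4 H5] := HI.
- split=> //= par; last by move=> Hc Ep; apply/HSt/(J2 par).
  move=> Ep; case: (J1 par Ep) => [[hh]|]; last by right; apply: HSt.
  rewrite Eo => /mem_pick [Ee|Hh]; last by left; exists hh.
  by right; apply/HSt/(J2 par) => //; by move: Hcl; rewrite -Ee.
- split=> //= par; last by move=> Hc Ep; apply/HSt/(J2 par).
  move=> Ep; case: (J1 par Ep) => [[hh]|]; last by right; apply: HSt.
  rewrite Eo => /mem_pick [Ee|Hh].
    subst e => /=.
    have Hk : sp \in known cf0 by rewrite H2 Ep.
    have HR : RI (href (ch cf0) sp) (known cf0) by apply: RIref.
    have [hv Hv] := h_some _ _ HR.
    by rewrite Hv; left; exists hv; rewrite /gval Ep mem_head.
  by left; case: (h _ _) => [hv|]; exists hh; rewrite ?in_cons Hh ?orbT.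
- apply: fold_J; first exact: expand_Inv0.
    move=> t; rewrite Hts => /andP[-> /eqP->]; split=> //.
    by apply: H3; rewrite Eo mem_cat mem_head orbT.
  apply: conj => par.
    move=> Ep; case: (J1 par Ep) => [[hh]|]; last by right; apply: HSt.
    rewrite Eo => /mem_pick [Ee|Hh]; last by left; exists hh.
    by right; apply: (HEx par) => //; rewrite -Ee.
  rewrite in_setU1 => /orP[/eqP Esp|Hc] Ep; first by apply: (HEx par) => //; rewrite -Esp.
  by apply/HSt/(J2 par).
Qed.

End Proof.
Theorem lemma2 (R : realFieldType) (S L : finType) (c : L -> R)
  (T : {set trans S L}) (sI : S) (SG : {set S})
  (Ih : Type) (ih0 : Ih) (hupd : Ih -> trans S L -> Ih) (href : Ih -> S -> Ih)
  (h : S -> Ih -> option R) (reeval : bool)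
  (c_ge0 : forall l, 0 <= c l)
  (h_ge0 : forall x io r, h x io = Some r -> 0 <= r)
  (hsafe : dyn_safe R S L T sI SG Ih ih0 hupd href h)
  (run : nat -> config R S L Ih) (ev : nat -> event S) (i : nat)
  (Hi : (1 <= i)%N)
  (Hinit : run 1%N = init_config R S L sI Ih ih0 h)
  (Hsteps : forall k, (1 <= k < i)%N ->
     iter_step R S L c T SG Ih hupd href h reeval (run k) (ev k) (run k.+1))
  (Hopen : open R S L Ih (run i) != [::])
  (s s' : S) (Hs : settled R S L c T sI Ih run ev i s)
  (Hs' : hstar_finite S L T SG s')
  (p : seq (trans S L)) (l : L)
  (Hp : optimal_path R S L c T sI (rcons p (s, l, s')) s') :
  (exists ghat hh, (s', ghat, hh) \in open R S L Ih (run i) /\ is_gstar R S L c T sI s' ghat)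
  \/ settled R S L c T sI Ih run ev i s'.
Proof.
have Hgs : is_gstar R S L c T sI s' (path_cost R S L c (rcons p (s, l, s'))).
  by case: Hp => H1 H2; split=> //; exists (rcons p (s, l, s')).
set gs := path_cost R S L c (rcons p (s, l, s')) in Hgs.
have HJ : forall k, (1 <= k <= i)%N ->
    Inv R S L c T sI Ih ih0 hupd href (run k) /\
    Jc R S L Ih s' gs (settled R S L c T sI Ih run ev k s') (run k).
  elim=> [|k IH] // /andP[Hk1 Hk2].
  case: (eqVneq k 0%N) => [Ek|Hk].
    subst k; rewrite Hinit /init_config; split.
      split=> //=.
      - move=> x g par; rewrite /pinit; case: eqP => // -> [<- _].
        by exists [::]; split=> //; rewrite /path_cost big_nil.
      - by move=> x; rewrite in_set1 /pinit; case: eqP.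
      - case: (h sI ih0) => [hv|] e //=; rewrite in_cons in_nil orbF => /eqP->.
        by rewrite in_set1 eqxx.
      - exact: sub0set.
      - exact: RI0.
    apply: conj => par /=; last by rewrite in_set0.
    rewrite /pinit; case: eqP => // Esp [Eg _]; subst s'.
    have [hv Hv] := h_some R S L T sI SG Ih ih0 hupd href h sI Hs' hsafe ih0 [set sI] (RI0 _ _ _ _ _ _ _ _).
    by rewrite Hv; left; exists hv; rewrite /gval /pinit eqxx -Eg mem_head.
  have Hk0 : (1 <= k)%N by rewrite lt0n.
  have [HI HJk] : Inv R S L c T sI Ih ih0 hupd href (run k) /\
    Jc R S L Ih s' gs (settled R S L c T sI Ih run ev k s') (run k).
    by apply: IH; rewrite Hk0 ltnW.
  have Hst := Hsteps k (introT andP (conj Hk0 Hk2)).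
  split; first exact: (step_Inv R S L c T sI SG Ih ih0 hupd href h reeval _ _ _ Hst HI).
  apply: (step_J R S L c T sI SG Ih ih0 hupd href h reeval s' gs Hgs Hs' hsafe _ _ _ _ _ Hst HI HJk).
    move=> [i' [/andP[H1 H2] H3 H4]]; exists i'; split=> //.
    by rewrite H1 ltnS ltnW.
  move=> par Eev Ep; exists k; split=> //; first by rewrite Hk0 ltnSn.
  by exists gs, par.
have [HIi HJi] := HJ i (introT andP (conj Hi (leqnn i))).
case: Hs => [i' [/andP[Hi1 Hi2] Eev [gsv [pars [Eps Hgsv]]]]].
have [Hpath HT0 _] := proj1 (is_path_rcons S L T sI p (s, l, s') s') (proj1 Hp).
have Hle : forall cf ev0 cf', iter_step R S L c T SG Ih hupd href h reeval cf ev0 cf' ->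
    ev0 = EExpand S s -> cp R S L Ih cf s = Some (gsv, pars) ->
    le_def R S L (cp R S L Ih cf') s' (gsv + c l).
  move=> cf ev0 cf' []; try by [].
  move=> cf0 o1 o2 e ts _ _ _ _ _ _ Hts [Ee] Ecp.
  apply: (fold_tgt R S L c Ih hupd h ts _ (s, l, s')).
    by rewrite Hts HT0 /= Ee eqxx.
  by exists gsv, pars.
have Hmono : forall k, (i'.+1 <= k <= i)%N -> le_def R S L (cp R S L Ih (run k)) s' (gsv + c l).
  elim=> [|k IH] // /andP[Hk1 Hk2].
  case: (eqVneq k i') => [Ek|Hk].
    subst k; apply: (Hle _ _ _ (Hsteps i' (introT andP (conj Hi1 Hi2))) Eev Eps).
  have Hk1' : (i'.+1 <= k)%N by rewrite ltn_neqAle eq_sym Hk -ltnS Hk1.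
  apply: (step_mono R S L c T SG Ih hupd href h reeval _ _ _ _ _ (Hsteps k _)).
    by rewrite (leq_trans Hi1 (ltnW Hk1')) Hk2.
  by apply: IH; rewrite Hk1' ltnW.
have [g [par [Eg Hg]]] := Hmono i (introT andP (conj Hi2 (leqnn i))).
have Hge : gs <= g.
  by case: HIi => H1 _ _ _ _; apply: (ginv_ge R S L c T sI s' gs Hgs _ _ _ H1 Eg).
have Hle2 : gsv + c l <= gs.
  rewrite /gs pcost_rcons lerD2r; exact: (proj2 Hgsv p Hpath).
have Egs : g = gs by apply/eqP; rewrite eq_le Hge andbT (le_trans Hg Hle2).
rewrite Egs in Eg.
case: (proj1 HJi par Eg) => [[hh Hh]|Hset]; last by right.
by left; exists gs, hh.
Qed.
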